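(* For each integer $n\ge1$, define the polynomial $$A_n(t)=\sum_{k=0}^{n}\frac{\cos\left(\frac{(n-k)\pi}{2}\right)k^n}{(n-k)!!\,(n+k)!!}\,t^k .$$ Then $A_n(t)=\frac{(-1)^n}{n!}\sum_{k=0}^{\lfloor n/2\rfloor}(-1)^k\binom{n}{k}\left(k-\frac{n}{2}\right)^n t^{n-2k}$, $A_n(0)=0$, $A_n(1)=\tfrac12$, and for $t\neq0$, $$A_n(t)+A_n(1/t)=\frac{(-1)^n}{n!}\sum_{k=0}^{n}(-1)^k\binom{n}{k}\left(k-\frac{n}{2}\right)^n t^{n-2k}.$$ Moreover, for $|t|$ and $|z|$ sufficiently small, $\sum_{n=1}^\infty t^nJ_n(nz)=\sum_{n=1}^\infty A_n(t)z^n$.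
   Context: $m!!$ denotes the double factorial, with $0!!=1$ (and $m!!=m\,(m-2)!!$, $1!!=1$). $J_n$ is the Bessel function of the first kind of order $n$. $\lfloor\cdot\rfloor$ denotes the integer part; $0^0$ is interpreted as $1$ where it occurs (the $k=0$ term in the first sum has $k^n=0$ for $n\ge1$). *)

(* Defs.v *)
From Stdlib Require Import Reals Lra Lia ZArith.
From Coquelicot Require Import Coquelicot.
Open Scope R_scope.

Fixpoint dfact (m : nat) : nat :=
  match m with
  | O => 1%nat
  | S O => 1%nat
  | S (S p as q) => (m * dfact p)%nat
  end.

Definition bessel_term (n : nat) (x : R) (m : nat) : R :=
  (-1) ^ m / (INR (fact m) * INR (fact (m + n))) * (x / 2) ^ (2 * m + n).

Definition besselJ (n : nat) (x : R) : R := Series (bessel_term n x).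

Definition A (n : nat) (t : R) : R :=
  sum_f_R0 (fun k => cos (INR (n - k) * PI / 2) * INR k ^ n
                     / (INR (dfact (n - k)) * INR (dfact (n + k))) * t ^ k) n.

(* Main.v *)
Require Import Defs.
From Stdlib Require Import Reals ZArith.
From Coquelicot Require Import Coquelicot.
From Stdlib Require Import Lra Lia.
Open Scope R_scope.

Lemma sum_rev (f : nat -> R) n :
  sum_f_R0 f n = sum_f_R0 (fun k => f (n - k)%nat) n.
Proof.
  induction n as [|n IH]; [reflexivity|].
  rewrite (decomp_sum (fun k => f (S n - k)%nat)) by lia.
  rewrite tech5. rewrite IH. simpl pred.
  replace (S n - 0)%nat with (S n) by lia. simpl. ring.
Qed.

Lemma sum_even_only (g : nat -> R) m :
  (forall l, (l <= 2*m)%nat -> Nat.odd l = true -> g l = 0) ->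
  sum_f_R0 g (2*m) = sum_f_R0 (fun i => g (2*i)%nat) m.
Proof.
  induction m as [|m IH]; intros H; [reflexivity|].
  replace (2 * S m)%nat with (S (S (2*m))) by lia.
  rewrite !tech5. rewrite IH by (intros; apply H; [lia|auto]).
  rewrite (H (S (2*m))) by (try lia; replace (S (2*m)) with (2*m+1)%nat by lia;
     apply Nat.odd_odd).
  replace (S (S (2*m))) with (2 * S m)%nat by lia. ring.
Qed.

Lemma sum_odd0 (g : nat -> R) N :
  (forall l, (l <= N)%nat -> Nat.odd l = true -> g l = 0) ->
  sum_f_R0 g N = sum_f_R0 (fun i => g (2*i)%nat) (Nat.div2 N).
Proof.
  intros H. pose proof (Nat.div2_odd N) as E.
  destruct (Nat.odd N) eqn:HO; simpl Nat.b2n in E.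
  - rewrite E at 1. replace (2 * Nat.div2 N + 1)%nat with (S (2 * Nat.div2 N)) by lia.
    rewrite tech5. rewrite sum_even_only by (intros; apply H; [lia|auto]).
    rewrite (H (S (2 * Nat.div2 N))); [ring|lia|].
    replace (S (2 * Nat.div2 N)) with N by lia. exact HO.
  - rewrite E at 1. rewrite Nat.add_0_r. apply sum_even_only.
    intros; apply H; [lia|auto].
Qed.

Lemma sum_trunc (f : nat -> R) M N :
  (M <= N)%nat -> (forall k, (M < k <= N)%nat -> f k = 0) ->
  sum_f_R0 f N = sum_f_R0 f M.
Proof.
  intros HMN H. induction N as [|N IH].
  - replace M with 0%nat by lia. reflexivity.
  - destruct (Nat.eq_dec M (S N)) as [->|Hne]; [reflexivity|].
    simpl. rewrite IH by (try lia; intros; apply H; lia).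
    rewrite (H (S N)) by lia. ring.
Qed.

Lemma sum_swap (F : nat -> nat -> R) n m :
  sum_f_R0 (fun k => sum_f_R0 (fun i => F k i) m) n =
  sum_f_R0 (fun i => sum_f_R0 (fun k => F k i) n) m.
Proof.
  induction n as [|n IH]; [reflexivity|].
  simpl sum_f_R0 at 1. rewrite IH. rewrite <- plus_sum. apply sum_eq. intros. reflexivity.
Qed.

Lemma dfact_even i : INR (dfact (2*i)) = 2^i * INR (fact i).
Proof.
  induction i as [|i IH]; [simpl; ring|].
  replace (2 * S i)%nat with (S (S (2*i))) by lia.
  change (dfact (S (S (2*i)))) with (S (S (2*i)) * dfact (2*i))%nat.
  rewrite mult_INR, IH. rewrite fact_simpl, mult_INR. rewrite !S_INR, mult_INR.
  simpl. ring.
Qed.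

Lemma cos_even i : cos (INR (2*i) * PI / 2) = (-1)^i.
Proof.
  replace (INR (2*i) * PI / 2) with (INR i * PI) by (rewrite mult_INR; simpl; field).
  induction i as [|i IH]; [simpl; rewrite Rmult_0_l; apply cos_0|].
  rewrite S_INR, Rmult_plus_distr_r, Rmult_1_l, neg_cos, IH. simpl; ring.
Qed.

Lemma cos_odd i : cos (INR (2*i+1) * PI / 2) = 0.
Proof.
  replace (INR (2*i+1) * PI / 2) with (PI/2 + INR i * PI)
    by (rewrite plus_INR, mult_INR; simpl; field).
  induction i as [|i IH]; [simpl; rewrite Rmult_0_l, Rplus_0_r; apply cos_PI2|].
  rewrite S_INR, Rmult_plus_distr_r, Rmult_1_l, <- Rplus_assoc, neg_cos, IH. ring.
Qed.

Lemma cos_oddn l : Nat.odd l = true -> cos (INR l * PI / 2) = 0.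
Proof.
  intros H. pose proof (Nat.div2_odd l) as E. rewrite H in E. simpl in E.
  rewrite E. apply cos_odd.
Qed.

Definition coef (n k : nat) : R :=
  cos (INR (n - k) * PI / 2) * INR k ^ n / (INR (dfact (n - k)) * INR (dfact (n + k))).

Lemma A_coef n t : A n t = sum_f_R0 (fun k => coef n k * t ^ k) n.
Proof. reflexivity. Qed.

Lemma C_def n k : Binomial.C n k = INR (fact n) / (INR (fact k) * INR (fact (n - k))).
Proof. reflexivity. Qed.

Lemma fact_pos' n : 0 < INR (fact n).
Proof. apply lt_0_INR, lt_O_fact. Qed.

Lemma coef_term n i : (2*i <= n)%nat ->
  coef n (n - 2*i) =
  (-1) ^ n / INR (fact n) * ((-1) ^ i * Binomial.C n i * (INR i - INR n / 2) ^ n).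
Proof.
  intros Hi. unfold coef.
  replace (n - (n - 2*i))%nat with (2*i)%nat by lia.
  replace (n + (n - 2*i))%nat with (2*(n-i))%nat by lia.
  rewrite cos_even, !dfact_even, C_def.
  replace (INR i - INR n / 2) with ((-1) * (INR (n - 2*i)) / 2)
    by (rewrite minus_INR, mult_INR by lia; simpl; field).
  unfold Rdiv. rewrite !Rpow_mult_distr, pow_inv.
  replace (2 ^ n) with (2^i * 2^(n-i)) by (rewrite <- pow_add; f_equal; lia).
  pose proof (fact_pos' n). pose proof (fact_pos' i). pose proof (fact_pos' (n-i)).
  replace ((-1)^n * (-1)^n) with 1 by (rewrite <- Rpow_mult_distr; replace (-1 * -1) with 1 by ring; symmetry; apply pow1).
  assert (0 < 2^i) by (apply pow_lt; lra). assert (0 < 2^(n-i)) by (apply pow_lt; lra).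
  field_simplify_eq; [|repeat split; lra].
  rewrite <- pow_mult, (Nat.mul_comm n 2), pow_mult. replace ((-1)^2) with 1 by ring. rewrite pow1. ring.
Qed.

Lemma scal_sum_l (f : nat -> R) c N : sum_f_R0 (fun i => c * f i) N = c * sum_f_R0 f N.
Proof. rewrite scal_sum. apply sum_eq; intros; ring. Qed.

Definition E (n : nat) (x : R) (m : nat) : R :=
  sum_f_R0 (fun k => (-1)^k * Binomial.C n k * (x + INR k)^m) n.

Definition Cp (n j : nat) : R := if Nat.leb j n then Binomial.C n j else 0.

Lemma E_rec n x m : E (S n) x m = E n x m - E n (x+1) m.
Proof.
  unfold E. rewrite decomp_sum by lia. simpl pred.
  set (g := fun k => (x + INR k)^m).
  transitivity (g 0%nat + sum_f_R0 (fun k => - ((-1)^k * Binomial.C n k * g (S k))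
                   + (-1)^(S k) * Cp n (S k) * g (S k)) n).
  - f_equal; [unfold g; simpl; rewrite C_n_0; ring|].
    apply sum_eq. intros k Hk.
    destruct (Nat.eq_dec k n) as [->|Hne].
    + unfold Cp. rewrite (proj2 (Nat.leb_gt (S n) n)) by lia. rewrite !C_n_n. unfold g; cbn [pow]; ring.
    + rewrite <- pascal by lia. unfold Cp. rewrite (proj2 (Nat.leb_le (S k) n)) by lia.
      unfold g; cbn [pow]; ring.
  - rewrite plus_sum.
    set (h := fun j => (-1)^j * Cp n j * g j).
    change (sum_f_R0 (fun k => (-1)^(S k) * Cp n (S k) * g (S k)) n)
      with (sum_f_R0 (fun k => h (S k)) n).
    assert (Hh : sum_f_R0 (fun k => h (S k)) n = sum_f_R0 h (S n) - h 0%nat).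
    { rewrite (decomp_sum h (S n)) by lia. simpl pred. ring. }
    rewrite Hh, tech5.
    assert (h (S n) = 0) by (unfold h, Cp; rewrite (proj2 (Nat.leb_gt (S n) n)) by lia; ring).
    assert (h 0%nat = g 0%nat) by (unfold h, Cp; simpl; rewrite C_n_0; ring).
    assert (sum_f_R0 h n = sum_f_R0 (fun k => (-1)^k * Binomial.C n k * (x + INR k)^m) n).
    { apply sum_eq. intros k Hk. unfold h, Cp, g. rewrite (proj2 (Nat.leb_le k n)) by lia. ring. }
    assert (sum_f_R0 (fun k => - ((-1)^k * Binomial.C n k * g (S k))) n =
            - sum_f_R0 (fun k => (-1)^k * Binomial.C n k * (x + 1 + INR k)^m) n).
    { rewrite <- (sum_eq (fun k => -1 * ((-1)^k * Binomial.C n k * (x + 1 + INR k)^m))).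
      - rewrite scal_sum_l. ring.
      - intros k Hk. unfold g. rewrite S_INR. replace (x + (INR k + 1)) with (x+1+INR k) by ring. ring. }
    lra.
Qed.

Lemma E_shift n x m : E n (x+1) m = sum_f_R0 (fun i => Binomial.C m i * E n x i) m.
Proof.
  unfold E.
  transitivity (sum_f_R0 (fun k => sum_f_R0 (fun i =>
      Binomial.C m i * ((-1)^k * Binomial.C n k * (x + INR k)^i)) m) n).
  - apply sum_eq. intros k Hk.
    replace (x + 1 + INR k) with ((x + INR k) + 1) by ring. rewrite binomial.
    rewrite scal_sum. apply sum_eq. intros i Hi. rewrite pow1. ring.
  - rewrite sum_swap. apply sum_eq. intros i Hi. rewrite scal_sum. apply sum_eq. intros; ring.
Qed.

Lemma sum_zero (f : nat -> R) N : (forall k, (k <= N)%nat -> f k = 0) -> sum_f_R0 f N = 0.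
Proof.
  intros H. rewrite (sum_eq f (fun _ => 0)) by auto. rewrite sum_cte. ring.
Qed.

Lemma sum_last_only (f : nat -> R) N : (forall k, (k < N)%nat -> f k = 0) -> sum_f_R0 f N = f N.
Proof.
  intros H. destruct N as [|N]; [reflexivity|]. rewrite tech5, sum_zero; [ring|].
  intros; apply H; lia.
Qed.

Lemma E_main n : forall x, (forall m, (m < n)%nat -> E n x m = 0) /\ E n x n = (-1)^n * INR (fact n).
Proof.
  induction n as [|n IH]; intros x.
  - split; [intros; lia|]. unfold E. simpl. rewrite C_n_0. ring.
  - assert (Hz : forall m, (m <= n)%nat -> E (S n) x m = 0).
    { intros m Hm. rewrite E_rec, E_shift.
      destruct m as [|m].
      + simpl. rewrite C_n_0. ring.
      + rewrite tech5, C_n_n.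
        rewrite sum_zero.
        * ring.
        * intros k Hk. rewrite (proj1 (IH x) k) by lia. ring. }
    split.
    + intros m Hm. apply Hz. lia.
    + rewrite E_rec, E_shift, !tech5, C_n_n.
      rewrite sum_last_only.
      * rewrite (proj2 (IH x)).
        assert (Binomial.C (S n) n = INR (S n)).
        { rewrite C_def. replace (S n - n)%nat with 1%nat by lia.
          rewrite fact_simpl, mult_INR. simpl (fact 1). pose proof (fact_pos' n). 
          change (INR 1) with 1. field. lra. }
        rewrite H, fact_simpl, mult_INR. simpl pow. ring.
      * intros k Hk. rewrite (proj1 (IH x) k) by lia. ring.
Qed.

Lemma E_n n x : E n x n = (-1)^n * INR (fact n).
Proof. apply E_main. Qed.

Definition aa (n k : nat) : R := (-1) ^ k * Binomial.C n k * (INR k - INR n / 2) ^ n.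

Lemma div2_le n : (2 * Nat.div2 n <= n)%nat.
Proof. pose proof (Nat.div2_odd n). lia. Qed.

Lemma part1 n t : (1 <= n)%nat ->
  A n t = (-1) ^ n / INR (fact n) *
     sum_f_R0 (fun k => (-1) ^ k * Binomial.C n k * (INR k - INR n / 2) ^ n
                              * t ^ (n - 2 * k)) (Nat.div2 n).
Proof.
  intros Hn. rewrite A_coef, sum_rev.
  rewrite (sum_odd0 (fun k => coef n (n - k) * t ^ (n - k))).
  - rewrite <- scal_sum_l. apply sum_eq. intros i Hi.
    pose proof (div2_le n).
    rewrite coef_term by lia. ring.
  - intros l Hl Ho. unfold coef. replace (n - (n - l))%nat with l by lia.
    rewrite cos_oddn by auto. unfold Rdiv. ring.
Qed.

Lemma sq_m1 m : (-1)^m * (-1)^m = 1.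
Proof. rewrite <- Rpow_mult_distr. replace (-1 * -1) with 1 by ring. apply pow1. Qed.

Lemma aa_sym n k : (k <= n)%nat -> aa n (n - k) = aa n k.
Proof.
  intros Hk. unfold aa. rewrite <- pascal_step1 by lia.
  rewrite minus_INR by lia.
  replace (INR n - INR k - INR n / 2) with ((-1) * (INR k - INR n / 2)) by field.
  rewrite Rpow_mult_distr.
  assert (E1 : (-1)^n = (-1)^(n-k) * (-1)^k) by (rewrite <- pow_add; f_equal; lia).
  rewrite E1. pose proof (sq_m1 k). pose proof (sq_m1 (n-k)).
  transitivity ((-1)^k * Binomial.C n k * (INR k - INR n / 2)^n *
                ((-1)^(n-k) * (-1)^(n-k))); [ring|].
  rewrite H0. ring.
Qed.

Lemma aa_half n k : (1 <= n)%nat -> (2 * k = n)%nat -> aa n k = 0.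
Proof.
  intros Hn Hk. unfold aa.
  replace (INR k - INR n / 2) with 0 by (rewrite <- Hk, mult_INR; simpl; field).
  rewrite pow_i by lia. ring.
Qed.

Lemma part4 n t : (1 <= n)%nat -> t <> 0 ->
  A n t + A n (/ t) = (-1) ^ n / INR (fact n) *
          sum_f_R0 (fun k => (-1) ^ k * Binomial.C n k * (INR k - INR n / 2) ^ n
                              * powerRZ t (Z.of_nat n - 2 * Z.of_nat k)%Z) n.
Proof.
  intros Hn Ht. rewrite !part1 by auto. rewrite <- Rmult_plus_distr_l. f_equal.
  set (g := fun k => aa n k * powerRZ t (Z.of_nat n - 2 * Z.of_nat k)%Z).
  change (sum_f_R0 (fun k => (-1) ^ k * Binomial.C n k * (INR k - INR n / 2) ^ n
                              * powerRZ t (Z.of_nat n - 2 * Z.of_nat k)%Z) n)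
    with (sum_f_R0 g n).
  rewrite (sum_eq g (fun k => (if Nat.leb (2*k) n then g k else 0) +
                              (if Nat.leb (2*k) n then 0 else g k)))
    by (intros; destruct (Nat.leb (2*i) n); ring).
  rewrite plus_sum. pose proof (div2_le n).
  f_equal.
  - rewrite (sum_trunc (fun k => if Nat.leb (2*k) n then g k else 0) (Nat.div2 n) n).
    + apply sum_eq. intros i Hi. rewrite (proj2 (Nat.leb_le (2*i) n)) by lia.
      unfold g, aa. f_equal. rewrite pow_powerRZ. f_equal. lia.
    + lia.
    + intros k Hk. rewrite (proj2 (Nat.leb_gt (2*k) n)); [reflexivity|].
      pose proof (Nat.div2_odd n). destruct (Nat.odd n); simpl in *; lia.
  - rewrite (sum_rev (fun i : nat => if Nat.leb (2 * i) n then 0 else g i)); cbv beta.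
    rewrite (sum_trunc (fun k => if Nat.leb (2*(n-k)) n then 0 else g (n-k)%nat) (Nat.div2 n) n).
    + apply sum_eq. intros i Hi.
      destruct (Nat.leb (2 * (n - i)) n) eqn:E.
      * apply Nat.leb_le in E. assert (2*i = n)%nat by lia.
        assert (HA : aa n i = 0) by (apply aa_half; auto). unfold aa in HA. rewrite HA. ring.
      * unfold g. rewrite aa_sym by lia. unfold aa. f_equal.
        replace (Z.of_nat n - 2 * Z.of_nat (n - i))%Z with (- Z.of_nat (n - 2*i))%Z
          by (rewrite !Nat2Z.inj_sub by lia; lia).
        rewrite powerRZ_neg', <- pow_powerRZ, pow_inv. reflexivity.
    + lia.
    + intros k Hk. destruct (Nat.leb (2 * (n - k)) n) eqn:E; [reflexivity|].
      apply Nat.leb_gt in E. exfalso.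
      pose proof (Nat.div2_odd n). destruct (Nat.odd n); simpl in *; lia.
Qed.

Lemma part_all n : (1 <= n)%nat ->
     (forall t : R,
        A n t = (-1) ^ n / INR (fact n) *
          sum_f_R0 (fun k => (-1) ^ k * Binomial.C n k * (INR k - INR n / 2) ^ n
                              * t ^ (n - 2 * k)) (Nat.div2 n))
     /\ A n 0 = 0
     /\ A n 1 = 1 / 2
     /\ (forall t : R, t <> 0 ->
        A n t + A n (/ t) = (-1) ^ n / INR (fact n) *
          sum_f_R0 (fun k => (-1) ^ k * Binomial.C n k * (INR k - INR n / 2) ^ n
                              * powerRZ t (Z.of_nat n - 2 * Z.of_nat k)%Z) n).
Proof.
  intros Hn. split; [intros; apply part1; auto|]. split; [|split; [|intros; apply part4; auto]].
  - rewrite A_coef. apply sum_zero. intros k Hk. destruct k.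
    + unfold coef. simpl INR. rewrite pow_i by lia. unfold Rdiv. ring.
    + rewrite pow_i by lia. ring.
  - pose proof (part4 n 1 Hn ltac:(lra)) as H. rewrite Rinv_1 in H.
    rewrite (sum_eq _ (fun k => (-1)^k * Binomial.C n k * ((- INR n / 2) + INR k)^n)) in H
      by (intros; rewrite powerRZ_R1, Rmult_1_r; replace (- INR n / 2 + INR i) with (INR i - INR n / 2) by field; reflexivity).
    fold (E n (- INR n / 2) n) in H. rewrite E_n in H.
    pose proof (fact_pos' n).
    replace ((-1) ^ n / INR (fact n) * ((-1) ^ n * INR (fact n))) with ((-1)^n * (-1)^n) in H
      by (field; lra).
    rewrite sq_m1 in H. lra.
Qed.

Lemma geom_scal (q c : R) : Rabs q < 1 -> is_series (fun k => c * q^k) (c / (1 - q)).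
Proof.
  intros H. apply (is_series_scal_l c (fun k => q^k) (/(1-q))). now apply is_series_geom.
Qed.

Lemma tail_bound (a : nat -> R) (q l : R) (K : nat) : 0 <= q < 1 -> (forall n, Rabs (a n) <= q^n) ->
  is_series a l -> Rabs (l - sum_f_R0 a K) <= q^(S K) / (1 - q).
Proof.
  intros Hq Hb Hs.
  assert (HT : is_series (fun k => a (S K + k)%nat) (l - sum_f_R0 a K)).
  { apply is_series_incr_n; [lia|]. simpl pred. rewrite sum_n_Reals.
    match goal with |- is_series _ ?x => replace x with l; [exact Hs|] end.
    unfold plus; simpl. ring. }
  assert (Hq' : Rabs q < 1) by (rewrite Rabs_pos_eq; lra).
  pose proof (geom_scal q (q^(S K)) Hq') as HG.
  rewrite <- (is_series_unique _ _ HT).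
  assert (HB : forall n, 0 <= Rabs (a (S K + n)%nat) <= q^(S K) * q^n).
  { intros n. split; [apply Rabs_pos|]. rewrite <- pow_add. apply Hb. }
  eapply Rle_trans; [apply Series_Rabs|].
  - apply (@ex_series_le R_AbsRing R_CompleteNormedModule _ (fun n => q^(S K) * q^n)).
    + intros n. change (norm _) with (Rabs (Rabs (a (S K + n)%nat))). rewrite Rabs_Rabsolu. apply HB.
    + eexists; exact HG.
  - rewrite <- (is_series_unique _ _ HG). apply Series_le; [apply HB|]. eexists; exact HG.
Qed.

Lemma INR_S_le_pow2 N : INR (S N) <= 2^N.
Proof.
  induction N as [|N IH]; [simpl; lra|]. rewrite S_INR. cbn [pow].
  assert (1 <= 2^N) by (apply pow_R1_Rle; lra). lra.
Qed.

Lemma tri (v : nat -> nat -> R) q : 0 <= q -> 2*q < 1 ->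
  (forall j N, Rabs (v j N) <= q^N) -> (forall j N, (N < j)%nat -> v j N = 0) ->
  (forall j, ex_series (v j)) /\ exists L,
     is_series (fun j => Series (v j)) L /\
     is_series (fun N => sum_f_R0 (fun j => v j N) N) L.
Proof.
  intros Hq Hq2 Hb Hz.
  assert (Hq' : Rabs q < 1) by (rewrite Rabs_pos_eq; lra).
  assert (Hq2' : Rabs (2*q) < 1) by (rewrite Rabs_pos_eq; lra).
  assert (Hex : forall j, ex_series (v j)).
  { intros j. apply (@ex_series_le R_AbsRing R_CompleteNormedModule _ (fun N => q^N)); [intros; apply Hb|]. now apply ex_series_geom. }
  split; [exact Hex|].
  set (r := fun N => sum_f_R0 (fun j => v j N) N).
  assert (Hrb : forall N, Rabs (r N) <= (2*q)^N).
  { intros N. unfold r. eapply Rle_trans; [apply Rsum_abs|].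
    eapply Rle_trans; [apply (sum_Rle _ (fun _ => q^N)); intros; apply Hb|].
    rewrite sum_cte, Rpow_mult_distr. rewrite Rmult_comm. apply Rmult_le_compat_r.
    - apply pow_le; lra.
    - apply INR_S_le_pow2. }
  assert (Hrex : ex_series r).
  { apply (@ex_series_le R_AbsRing R_CompleteNormedModule _ (fun N => (2*q)^N)); [intros; apply Hrb|]. now apply ex_series_geom. }
  exists (Series r). split; [|apply Series_correct; exact Hrex].
  set (col := fun j => Series (v j)).
  assert (Hcol : forall j, is_series (v j) (col j)) by (intros; apply Series_correct; auto).
  assert (Hid : forall K, sum_f_R0 r K = sum_f_R0 (fun j => sum_f_R0 (fun N => v j N) K) K).
  { intros K. rewrite <- sum_swap. apply sum_eq. intros N HN. unfold r.
    symmetry. apply sum_trunc; [lia|]. intros k Hk. apply Hz. lia. }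
  assert (Hd : forall K, Rabs (sum_f_R0 col K - sum_f_R0 r K) <= (2*q)/(1-q) * (2*q)^K).
  { intros K. rewrite Hid, <- minus_sum.
    eapply Rle_trans; [apply Rsum_abs|].
    eapply Rle_trans; [apply (sum_Rle _ (fun _ => q^(S K) / (1 - q)))|].
    - intros j Hj. apply tail_bound; [lra| apply Hb | apply Hcol].
    - rewrite sum_cte.
      replace ((2*q)/(1-q) * (2*q)^K) with ((2^(S K)) * (q^(S K) / (1-q)))
        by (simpl; rewrite Rpow_mult_distr; field; lra).
      rewrite Rmult_comm. apply Rmult_le_compat_r.
      + apply Rmult_le_pos; [apply pow_le; lra| apply Rlt_le, Rinv_0_lt_compat; lra].
      + eapply Rle_trans; [apply INR_S_le_pow2|]. simpl. 
        assert (1 <= 2^K) by (apply pow_R1_Rle; lra). lra. }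
  apply is_series_Reals. change (Un_cv (sum_f_R0 col) (Series r)). apply is_lim_seq_Reals.
  apply is_lim_seq_ext with (fun K => sum_f_R0 r K + (sum_f_R0 col K - sum_f_R0 r K));
    [intros; ring|].
  replace (Finite (Series r)) with (Finite (Series r + 0)) by (f_equal; ring).
  apply is_lim_seq_plus'.
  - apply is_lim_seq_Reals. pose proof (Series_correct _ Hrex) as H.
    apply is_series_Reals in H. exact H.
  - assert (HL : is_lim_seq (fun K => (2*q)/(1-q) * (2*q)^K) 0).
    { pose proof (is_lim_seq_scal_l _ ((2*q)/(1-q)) _ (is_lim_seq_geom _ Hq2')) as H.
      simpl in H. rewrite Rmult_0_r in H. exact H. }
    apply is_lim_seq_le_le with (fun K => - ((2*q)/(1-q) * (2*q)^K)) (fun K => (2*q)/(1-q) * (2*q)^K).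
    + intros K. apply Rabs_le_between. apply Hd.
    + replace (Finite 0) with (Rbar_opp 0) by (simpl; f_equal; ring).
      apply (is_lim_seq_opp (fun K => (2*q)/(1-q) * (2*q)^K)). exact HL.
    + exact HL.
Qed.

Lemma term_le_sum (f : nat -> R) k N : (forall i, 0 <= f i) -> (k <= N)%nat -> f k <= sum_f_R0 f N.
Proof.
  intros Hf Hk. induction N as [|N IH].
  - replace k with 0%nat by lia. simpl; lra.
  - destruct (Nat.eq_dec k (S N)) as [->|Hne].
    + rewrite tech5. pose proof (cond_pos_sum f N Hf). lra.
    + rewrite tech5. specialize (IH ltac:(lia)). specialize (Hf (S N)). lra.
Qed.

Lemma exp_INR N : exp (INR N) = exp 1 ^ N.
Proof.
  induction N as [|N IH]; [simpl; apply exp_0|].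
  rewrite S_INR, exp_plus, IH. simpl. ring.
Qed.

Lemma pow_self_bound N : INR N ^ N <= 3 ^ N * INR (fact N).
Proof.
  pose proof (exp_ge_taylor (INR N) N (pos_INR N)) as H.
  pose proof (term_le_sum (fun k => INR N ^ k / INR (fact k)) N N) as H2.
  assert (H3 : INR N ^ N / INR (fact N) <= exp (INR N)).
  { eapply Rle_trans; [apply H2|exact H]; [|lia].
    intros i. apply Rmult_le_pos; [apply pow_le, pos_INR|apply Rlt_le, Rinv_0_lt_compat, fact_pos']. }
  rewrite exp_INR in H3.
  assert (exp 1 ^ N <= 3 ^ N) by (apply pow_incr; split; [apply Rlt_le, exp_pos|apply exp_le_3]).
  pose proof (fact_pos' N).
  apply (Rmult_le_compat_r (INR (fact N))) in H3; [|lra].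
  unfold Rdiv in H3. rewrite Rmult_assoc, Rinv_l, Rmult_1_r in H3 by lra.
  apply (Rmult_le_compat_r (INR (fact N))) in H0; [|lra]. lra.
Qed.

Lemma binom_le N m : (m <= N)%nat -> Binomial.C N m <= 2 ^ N.
Proof.
  intros Hm. replace 2 with (1+1) by ring. rewrite binomial.
  eapply Rle_trans; [|apply (term_le_sum _ m N)]; [cbv beta; rewrite !pow1; lra| |exact Hm].
  intros i. rewrite !pow1, !Rmult_1_r. rewrite C_def.
  pose proof (fact_pos' N). pose proof (fact_pos' i). pose proof (fact_pos' (N - i)).
  apply Rlt_le. apply Rdiv_lt_0_compat; [lra|apply Rmult_lt_0_compat; lra].
Qed.

Lemma bt_bound j m z : Rabs (bessel_term j (INR j * z) m) <= (3 * Rabs z) ^ (2*m + j).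
Proof.
  set (N := (2*m + j)%nat).
  unfold bessel_term. fold N.
  pose proof (fact_pos' m). pose proof (fact_pos' (m+j)). pose proof (fact_pos' N).
  assert (0 < 2^N) by (apply pow_lt; lra).
  assert (Hd : 0 < 2^N * (INR (fact m) * INR (fact (m+j)))) by (repeat apply Rmult_lt_0_compat; lra).
  replace ((-1) ^ m / (INR (fact m) * INR (fact (m + j))) * (INR j * z / 2) ^ N)
    with ((-1)^m * ((INR j * z)^N / (2^N * (INR (fact m) * INR (fact (m+j))))))
    by (unfold Rdiv; rewrite !Rpow_mult_distr, pow_inv; field; repeat split; lra).
  rewrite Rabs_mult, pow_1_abs, Rmult_1_l. unfold Rdiv. rewrite Rabs_mult.
  rewrite (Rabs_pos_eq (/ _)) by (apply Rlt_le, Rinv_0_lt_compat; lra).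
  rewrite <- RPow_abs, Rabs_mult, (Rabs_pos_eq (INR j)) by apply pos_INR.
  assert (HC : INR (fact N) <= 2^N * (INR (fact m) * INR (fact (m+j)))).
  { pose proof (binom_le N m ltac:(unfold N; lia)) as HB. rewrite C_def in HB.
    replace (N - m)%nat with (m + j)%nat in HB by (unfold N; lia).
    apply (Rmult_le_compat_r (INR (fact m) * INR (fact (m+j)))) in HB;
      [|apply Rmult_le_pos; lra].
    unfold Rdiv in HB. rewrite Rmult_assoc, Rinv_l, Rmult_1_r in HB; [exact HB|].
    apply Rgt_not_eq, Rmult_lt_0_compat; lra. }
  assert (HJ : INR j ^ N <= 3^N * INR (fact N)).
  { eapply Rle_trans; [|apply pow_self_bound]. apply pow_incr. split; [apply pos_INR|].
    apply le_INR. unfold N; lia. }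
  assert (0 <= Rabs z ^ N) by (apply pow_le, Rabs_pos).
  assert (0 <= 3 ^ N) by (apply pow_le; lra).
  assert (INR j ^ N <= 3^N * (2^N * (INR (fact m) * INR (fact (m+j))))).
  { eapply Rle_trans; [exact HJ|]. apply Rmult_le_compat_l; lra. }
  rewrite Rpow_mult_distr, Rpow_mult_distr.
  replace (INR j ^ N * Rabs z ^ N * / (2 ^ N * (INR (fact m) * INR (fact (m + j)))))
    with ((INR j ^ N / (2^N * (INR (fact m) * INR (fact (m+j))))) * Rabs z ^ N)
    by (field; lra).
  apply Rmult_le_compat_r; [lra|].
  apply Rle_div_l; [lra|]. lra.
Qed.

Definition w (t z : R) (j N : nat) : R := coef N j * t^j * z^N.
Definition v (t z : R) (j N : nat) : R := if Nat.leb j N then w t z j N else 0.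

Lemma w_even t z j m : w t z j (j + 2*m) = t^j * bessel_term j (INR j * z) m.
Proof.
  unfold w, coef, bessel_term.
  replace (j + 2*m - j)%nat with (2*m)%nat by lia.
  replace (j + 2*m + j)%nat with (2*(m+j))%nat by lia.
  rewrite cos_even, !dfact_even.
  replace (2*m + j)%nat with (j + 2*m)%nat by lia.
  unfold Rdiv. rewrite !Rpow_mult_distr, pow_inv.
  replace (2 ^ (j + 2*m)) with (2^m * 2^(m+j)) by (rewrite <- pow_add; f_equal; lia).
  pose proof (fact_pos' m). pose proof (fact_pos' (m+j)).
  assert (0 < 2^m) by (apply pow_lt; lra). assert (0 < 2^(m+j)) by (apply pow_lt; lra).
  field. repeat split; lra.
Qed.

Lemma w_odd t z j m : w t z j (j + 2*m + 1) = 0.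
Proof.
  unfold w, coef. replace (j + 2*m + 1 - j)%nat with (2*m+1)%nat by lia.
  rewrite cos_odd. unfold Rdiv. ring.
Qed.

Lemma pow_le1 x n : 0 <= x <= 1 -> x ^ n <= 1.
Proof. intros H. rewrite <- (pow1 n). apply pow_incr. lra. Qed.

Lemma v_bound t z j N : Rabs t <= 1 -> Rabs (v t z j N) <= (3 * Rabs z)^N.
Proof.
  intros Ht. assert (Hq : 0 <= (3 * Rabs z)^N) by (apply pow_le; pose proof (Rabs_pos z); lra).
  unfold v. destruct (Nat.leb j N) eqn:E.
  - apply Nat.leb_le in E.
    pose proof (Nat.div2_odd (N - j)) as D. set (m := Nat.div2 (N - j)) in D.
    destruct (Nat.odd (N - j)); simpl Nat.b2n in D.
    + replace N with (j + 2*m + 1)%nat by lia. rewrite w_odd, Rabs_R0. 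
      replace (j + 2*m + 1)%nat with N by lia. exact Hq.
    + replace N with (j + 2*m)%nat by lia. rewrite w_even, Rabs_mult, <- RPow_abs.
      replace (j + 2*m)%nat with (2*m + j)%nat by lia.
      pose proof (bt_bound j m z).
      assert (Rabs t ^ j <= 1) by (apply pow_le1; split; [apply Rabs_pos|lra]).
      assert (0 <= Rabs t ^ j) by (apply pow_le, Rabs_pos).
      assert (0 <= (3 * Rabs z) ^ (2*m+j)) by (apply pow_le; pose proof (Rabs_pos z); lra).
      pose proof (Rabs_pos (bessel_term j (INR j * z) m)).
      nra.
  - rewrite Rabs_R0. exact Hq.
Qed.

Lemma v_zero t z j N : (N < j)%nat -> v t z j N = 0.
Proof. intros H. unfold v. rewrite (proj2 (Nat.leb_gt j N)) by lia. reflexivity. Qed.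

Lemma v_row t z N : sum_f_R0 (fun j => v t z j N) N = A N t * z^N.
Proof.
  rewrite A_coef, Rmult_comm, scal_sum. apply sum_eq. intros j Hj.
  unfold v, w. rewrite (proj2 (Nat.leb_le j N)) by lia. ring.
Qed.

Lemma sum_shift0 (c : nat -> R) j K : (forall k, (k < j)%nat -> c k = 0) ->
  sum_f_R0 c (j + K) = sum_f_R0 (fun k => c (j + k)%nat) K.
Proof.
  intros H. induction K as [|K IH].
  - rewrite Nat.add_0_r. rewrite sum_last_only by auto. simpl. rewrite Nat.add_0_r. reflexivity.
  - rewrite Nat.add_succ_r, !tech5, IH. rewrite Nat.add_succ_r. reflexivity.
Qed.

Definition pad (b : nat -> R) (j N : nat) : R :=
  if Nat.ltb N j then 0 else if Nat.odd (N - j) then 0 else b (Nat.div2 (N - j)).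

Lemma pad_sum b j K : sum_f_R0 (pad b j) (j + K) = sum_f_R0 b (Nat.div2 K).
Proof.
  rewrite sum_shift0.
  - rewrite (sum_odd0 (fun k => pad b j (j + k))).
    + apply sum_eq. intros i Hi. unfold pad.
      rewrite (proj2 (Nat.ltb_ge (j + 2*i) j)) by lia.
      replace (j + 2*i - j)%nat with (2*i)%nat by lia.
      rewrite Nat.odd_even, Nat.div2_double. reflexivity.
    + intros l Hl Ho. unfold pad. rewrite (proj2 (Nat.ltb_ge (j + l) j)) by lia.
      replace (j + l - j)%nat with l by lia. rewrite Ho. reflexivity.
  - intros k Hk. unfold pad. rewrite (proj2 (Nat.ltb_lt k j)) by lia. reflexivity.
Qed.

Lemma pad_series b (l : R) j : is_series b l -> is_series (pad b j) l.
Proof.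
  intros H. apply is_series_Reals in H. apply is_series_Reals.
  intros eps Heps. destruct (H eps Heps) as [M HM].
  exists (j + 2*M)%nat. intros n Hn.
  replace n with (j + (n - j))%nat by lia. rewrite pad_sum. apply HM.
  unfold ge. apply Nat.div2_le_lower_bound. lia.
Qed.

Lemma pow_decr x a b : 0 <= x <= 1 -> (a <= b)%nat -> x ^ b <= x ^ a.
Proof.
  intros Hx Hab. replace b with (a + (b - a))%nat by lia. rewrite pow_add.
  assert (0 <= x^a) by (apply pow_le; lra).
  assert (x^(b-a) <= 1) by (apply pow_le1; lra).
  assert (0 <= x^(b-a)) by (apply pow_le; lra). nra.
Qed.

Lemma bessel_ex j z : 3 * Rabs z < 1 -> ex_series (bessel_term j (INR j * z)).
Proof.
  intros Hz.
  apply (@ex_series_le R_AbsRing R_CompleteNormedModule _ (fun m => (3 * Rabs z)^m)).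
  - intros m. change (norm _) with (Rabs (bessel_term j (INR j * z) m)).
    eapply Rle_trans; [apply bt_bound|].
    pose proof (Rabs_pos z). apply pow_decr; [lra|lia].
  - apply ex_series_geom. pose proof (Rabs_pos z). rewrite Rabs_pos_eq; lra.
Qed.

Lemma v_col t z j : 3 * Rabs z < 1 -> is_series (v t z j) (t^j * besselJ j (INR j * z)).
Proof.
  intros Hz.
  pose proof (Series_correct _ (bessel_ex j z Hz)) as HB.
  assert (HS : is_series (fun m => t^j * bessel_term j (INR j * z) m) (t^j * besselJ j (INR j * z)))
    by (apply (is_series_scal_l (t^j) _ _ HB)).
  apply (is_series_ext (pad (fun m => t^j * bessel_term j (INR j * z) m) j)).
  2: { apply pad_series. exact HS. }
  intros N. unfold pad. destruct (Nat.ltb N j) eqn:E.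
  - apply Nat.ltb_lt in E. rewrite v_zero by lia. reflexivity.
  - apply Nat.ltb_ge in E.
    pose proof (Nat.div2_odd (N - j)) as D. set (m := Nat.div2 (N - j)) in *.
    unfold v. rewrite (proj2 (Nat.leb_le j N)) by lia.
    destruct (Nat.odd (N - j)); simpl Nat.b2n in D.
    + replace N with (j + 2*m + 1)%nat by lia. rewrite w_odd. reflexivity.
    + replace N with (j + 2*m)%nat by lia. rewrite w_even. reflexivity.
Qed.

Lemma zero_series : is_series (fun _ : nat => 0) 0.
Proof.
  apply is_series_Reals. intros eps Heps. exists 0%nat. intros n _.
  rewrite sum_cte, Rmult_0_l. unfold Rdist. rewrite Rminus_0_r, Rabs_R0. lra.
Qed.

Theorem bessel_part :
  (exists delta : R, 0 < delta /\
     forall t z : R, Rabs t < delta -> Rabs z < delta ->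
       exists s : R,
         is_series (fun n => t ^ (n+1) * besselJ (n+1)%nat (INR (n+1)%nat * z)) s /\
         is_series (fun n => A (n+1)%nat t * z ^ (n+1)) s).
Proof.
  exists (1/7). split; [lra|]. intros t z Ht Hz.
  pose proof (Rabs_pos z) as Hz0.
  destruct (tri (v t z) (3 * Rabs z)) as [Hex [L [HC HR]]].
  - lra.
  - lra.
  - intros j N. apply v_bound. lra.
  - intros j N H. apply v_zero. exact H.
  - change R in L. exists (L - Series (v t z 0)).
    assert (H0 : Series (v t z 0) = v t z 0 0).
    { apply is_series_unique. apply is_series_decr_1.
      apply (is_series_ext (fun _ => 0)).
      - intros k. unfold v, w, coef. simpl Nat.leb. cbv iota.
        simpl INR. rewrite pow_i by lia. unfold Rdiv. match goal with |- ?a = ?b => change (@eq R a b) end. ring.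
      - match goal with |- is_series _ ?x => replace x with 0 end; [apply zero_series|].
        unfold plus, opp; simpl. ring. }
    split.
    + apply (is_series_ext (fun k => Series (v t z (S k)))).
      * intros k. rewrite Nat.add_1_r. apply is_series_unique. apply v_col. lra.
      * apply (is_series_incr_1 (fun j => Series (v t z j))).
        match goal with |- is_series _ ?x => replace x with L end; [exact HC|].
        unfold plus; simpl. match goal with |- ?a = ?b => change (@eq R a b) end. ring.
    + apply (is_series_ext (fun k => sum_f_R0 (fun j => v t z j (S k)) (S k))).
      * intros k. rewrite Nat.add_1_r. apply v_row.
      * apply (is_series_incr_1 (fun N => sum_f_R0 (fun j => v t z j N) N)).
        match goal with |- is_series _ ?x => replace x with L end; [exact HR|].
        unfold plus; simpl. match goal with |- ?a = ?b => change (@eq R a b) end. rewrite H0. ring.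
Qed.

Theorem mainTheorem2 :
  (forall (n : nat), (1 <= n)%nat ->
     (forall t : R,
        A n t = (-1) ^ n / INR (fact n) *
          sum_f_R0 (fun k => (-1) ^ k * Binomial.C n k * (INR k - INR n / 2) ^ n
                              * t ^ (n - 2 * k)) (Nat.div2 n))
     /\ A n 0 = 0
     /\ A n 1 = 1 / 2
     /\ (forall t : R, t <> 0 ->
        A n t + A n (/ t) = (-1) ^ n / INR (fact n) *
          sum_f_R0 (fun k => (-1) ^ k * Binomial.C n k * (INR k - INR n / 2) ^ n
                              * powerRZ t (Z.of_nat n - 2 * Z.of_nat k)%Z) n))
  /\
  (exists delta : R, 0 < delta /\
     forall t z : R, Rabs t < delta -> Rabs z < delta ->
       exists s : R,
         is_series (fun n => t ^ (n+1) * besselJ (n+1)%nat (INR (n+1)%nat * z)) s /\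
         is_series (fun n => A (n+1)%nat t * z ^ (n+1)) s).
Proof.
  split.
  - exact part_all.
  - exact bessel_part.
Qed.
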